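(* Let $\rho^a,\rho^b\in\mathbb R^M_{>0}$, $M_a=\{j\in M:\rho^a_j\ge\rho^b_j\}$ and $M_b=\{j\in M:\rho^a_j\le\rho^b_j\}$. Then $${\rm LW}^{{\rm OPT}(M_a,\rho^a)}+{\rm LW}^{{\rm OPT}(M_b,\rho^b)}\ \ge\ \frac12\bigl({\rm LW}^{{\rm OPT}(M,\rho^a)}+{\rm LW}^{{\rm OPT}(M,\rho^b)}\bigr).$$
   Context: Market model. Buyers $N_0=\{1,\dots,n\}$, sellers $M=\{1,\dots,m\}$, bipartite edge set $E\subseteq N_0\times M$; $E_S$ is the set of edges incident to participants in $S$ ($E_i=E_{\{i\}}$); $w(F)=\sum_{e\in F}w_e$. Each seller $j$ has a monotone submodular $f_j:2^{E_j}\to\mathbb R_+$ with $f_j(\emptyset)=0$, polymatroid $P_j=\{y\in\mathbb R^{E_j}_+:y(F)\le f_j(F)\ \forall F\subseteq E_j\}$ ($f_j(E_j)$ = her total amount of a homogeneous divisible good). Buyer $i$ has per-unit valuation $v_i>0$ and budget $B_i\ge0$. For a seller set $M'\subseteq M$ and seller valuations $\sigma\in\mathbb R^{M'}_{>0}$, consider the submarket with sellers $M'$, edges $E'=\{ij\in E:j\in M'\}$ and constraint $P_{M'}=\{w\in\mathbb R^{E'}_+: w|_{E_j}\in P_j\ \forall j\in M'\}$; for $w\in P_{M'}$ its liquid welfare is $\sum_{i\in N_0}\min(v_iw(E_i\cap E'),B_i)+\sum_{j\in M'}\sigma_j(f_j(E_j)-w(E_j))$, and ${\rm LW}^{{\rm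 OPT}(M',\sigma)}$ is the maximum of this over $w\in P_{M'}$. *)

(* Defs.v *)
From mathcomp Require Import classical_sets reals.
From mathcomp Require Import all_boot all_order all_algebra.
Set Implicit Arguments. Unset Strict Implicit. Unset Printing Implicit Defensive.
Import Order.TTheory GRing.Theory Num.Theory.
Local Open Scope ring_scope.

(* Buyers are 'I_n, sellers are 'I_m, edges are pairs (buyer, seller). *)
Section Market.
Variables (R : realType) (n m : nat).
Notation edge := ('I_n * 'I_m)%type.

Definition sedges (E : {set edge}) (j : 'I_m) : {set edge} := [set e in E | e.2 == j].
Definition bedges (E : {set edge}) (i : 'I_n) : {set edge} := [set e in E | e.1 == i].
Definition subedges (E : {set edge}) (M' : {set 'I_m}) : {set edge} :=
  [set e in E | e.2 \in M'].

(* f_j : 2^{E_j} -> R_+ is monotone submodular with f_j(emptyset) = 0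
   (only the values of f j on subsets of E_j are relevant). *)
Definition mono_submod_on (Ej : {set edge}) (g : {set edge} -> R) : Prop :=
  [/\ g set0 = 0,
      (forall A : {set edge}, A \subset Ej -> 0 <= g A),
      (forall A B : {set edge}, A \subset B -> B \subset Ej -> g A <= g B) &
      (forall A B : {set edge}, A \subset Ej -> B \subset Ej ->
                   g (A :|: B) + g (A :&: B) <= g A + g B)].

(* w in P_{M'}: w is a vector on E' (represented as a function vanishing
   outside E'), nonnegative, with w|_{E_j} in the polymatroid P_j for j in M'. *)
Definition feasible (E : {set edge}) (f : 'I_m -> {set edge} -> R)
  (M' : {set 'I_m}) (w : edge -> R) : Prop :=
  [/\ (forall e, e \notin subedges E M' -> w e = 0),
      (forall e, e \in subedges E M' -> 0 <= w e) &
      (forall j, j \in M' -> forall F : {set edge}, F \subset sedges E j ->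
                 \sum_(e in F) w e <= f j F)].

Definition LW (E : {set edge}) (f : 'I_m -> {set edge} -> R)
  (v B : 'I_n -> R) (M' : {set 'I_m}) (sigma : 'I_m -> R) (w : edge -> R) : R :=
  \sum_(i < n) Num.min (v i * \sum_(e in bedges E i :&: subedges E M') w e) (B i)
  + \sum_(j in M') sigma j * (f j (sedges E j) - \sum_(e in sedges E j) w e).

(* LW^{OPT(M', sigma)}: the maximum (= supremum) of LW over P_{M'} *)
Definition LWOPT (E : {set edge}) (f : 'I_m -> {set edge} -> R)
  (v B : 'I_n -> R) (M' : {set 'I_m}) (sigma : 'I_m -> R) : R :=
  reals.sup (fun x : R => exists w, feasible E f M' w /\ x = LW E f v B M' sigma w).

End Market.

(* Main.v *)
Require Import Defs.
From mathcomp Require Import classical_sets reals.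
From mathcomp Require Import all_boot all_order all_algebra.
From mathcomp Require Import lra.
Import Order.TTheory GRing.Theory Num.Theory.
Local Open Scope ring_scope.

Section Helpers.
Variables (R : realType) (n m : nat) (E : {set 'I_n * 'I_m})
  (f : 'I_m -> {set 'I_n * 'I_m} -> R) (v B : 'I_n -> R).

Definition restr (M' : {set 'I_m}) (w : 'I_n * 'I_m -> R) :=
  fun e : 'I_n * 'I_m => if e.2 \in M' then w e else 0.

Lemma LWE M' s w : LW E f v B M' s w =
  \sum_(i < n) Num.min (v i * \sum_(e in bedges E i :&: subedges E M') w e) (B i)
  + \sum_(j in M') s j * (f j (sedges E j) - \sum_(e in sedges E j) w e).
Proof. by []. Qed.

Lemma feas_restr M' w : feasible E f [set: 'I_m] w -> feasible E f M' (restr M' w).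
Proof.
case=> h1 h2 h3; split.
- move=> e; rewrite /restr /subedges !inE; case: ifP => // hM.
  rewrite andbT => hE; apply: h1; by rewrite /subedges !inE andbT.
- move=> e; rewrite /restr /subedges !inE => /andP[hE ->].
  apply: h2; by rewrite /subedges !inE hE.
- move=> j hj F hF.
  have -> : \sum_(e in F) restr M' w e = \sum_(e in F) w e.
    apply: eq_bigr => e eF; rewrite /restr.
    move/subsetP: hF => /(_ e eF); rewrite /sedges inE => /andP[_ /eqP ->].
    by rewrite hj.
  by apply: h3 => //; rewrite inE.
Qed.

Lemma LW_restr M' s w : LW E f v B M' s (restr M' w) = LW E f v B M' s w.
Proof.
rewrite !LWE; congr (_ + _).
- apply: eq_bigr => i _; congr (Num.min (_ * _) _).
  apply: eq_bigr => e; rewrite /restr /subedges !inE => /andP[_ /andP[_ ->]] //.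
- apply: eq_bigr => j hj; congr (_ * (_ - _)).
  apply: eq_bigr => e; rewrite /restr /sedges !inE => /andP[_ /eqP ->].
  by rewrite hj.
Qed.

Lemma LW_ub M' s w : (forall j, 0 <= s j) -> feasible E f M' w ->
  LW E f v B M' s w <= \sum_(i < n) B i + \sum_(j in M') s j * f j (sedges E j).
Proof.
move=> hs [h1 h2 h3]; rewrite !LWE; apply: lerD.
  by apply: ler_sum => i _; rewrite ge_min lexx orbT.
apply: ler_sum => j hj.
have : 0 <= \sum_(e in sedges E j) w e.
  apply: sumr_ge0 => e; rewrite /sedges inE => /andP[hE /eqP hj']; apply: h2.
  by rewrite /subedges inE hE hj' hj.
have := hs j; move: (s j) (f j (sedges E j)) (\sum_(e in sedges E j) w e) => a b c ha hc.
rewrite mulrBr lerBlDr lerDl; exact: mulr_ge0.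
Qed.

Lemma feas0 M' : (forall j, mono_submod_on (sedges E j) (f j)) ->
  feasible E f M' (fun _ => 0).
Proof.
move=> hf; split => // j _ F hF; rewrite big1 //.
by case: (hf j) => _ h _ _; apply: h.
Qed.

Lemma le_LWOPT M' s w : (forall j, 0 <= s j) ->
  (forall j, mono_submod_on (sedges E j) (f j)) ->
  feasible E f M' w -> LW E f v B M' s w <= LWOPT E f v B M' s.
Proof.
move=> hs hf hw; rewrite /LWOPT; apply: ub_le_sup; last by exists w.
exists (\sum_(i < n) B i + \sum_(j in M') s j * f j (sedges E j)).
by move=> x [w' [hw' ->]]; apply: LW_ub.
Qed.

Lemma min_sub (a b c D : R) : 0 <= a -> 0 <= b -> c <= a + b -> 0 <= D ->
  Num.min c D <= Num.min a D + Num.min b D.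
Proof.
move=> ha hb hc hD.
have h1 : Num.min c D <= c by rewrite ge_min lexx.
have h2 : Num.min c D <= D by rewrite ge_min lexx orbT.
case: (leP a D) => haD; case: (leP b D) => hbD; lra.
Qed.

Lemma combine (Ma Mb : {set 'I_m}) (s sa sb : 'I_m -> R) w :
  (forall i, 0 < v i) -> (forall i, 0 <= B i) ->
  (forall j, 0 <= sa j) -> (forall j, 0 <= sb j) ->
  (forall j, (j \in Ma /\ s j <= sa j) \/ (j \in Mb /\ s j <= sb j)) ->
  feasible E f [set: 'I_m] w ->
  LW E f v B [set: 'I_m] s w <= LW E f v B Ma sa w + LW E f v B Mb sb w.
Proof.
move=> hv hB hsa hsb hcov [h1 h2 h3].
have wpos : forall e, e \in E -> 0 <= w e.
  by move=> e hE; apply: h2; rewrite /subedges !inE hE.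
rewrite !LWE addrACA; apply: lerD.
  rewrite -big_split /=; apply: ler_sum => i _.
  apply: min_sub; last exact: hB.
  - apply: mulr_ge0; first exact: ltW.
    by apply: sumr_ge0 => e; rewrite /bedges /subedges !inE => /andP[_ /andP[hE _]]; apply: wpos.
  - apply: mulr_ge0; first exact: ltW.
    by apply: sumr_ge0 => e; rewrite /bedges /subedges !inE => /andP[_ /andP[hE _]]; apply: wpos.
  rewrite -mulrDr ler_wpM2l //; first exact: ltW.
  rewrite big_mkcond [X in _ <= X + _]big_mkcond [X in _ <= _ + X]big_mkcond -big_split /=; apply: ler_sum => e _.
  rewrite /bedges /subedges !inE andbT.
  case hE: (e \in E); last by rewrite /= addr0.
  have := wpos e hE.
  case: (e.1 == i) => /=; last by rewrite addr0.
  case: (hcov e.2) => [[-> _]|[-> _]]; case: (_ \in _) => /= h; lra.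
rewrite big_mkcond [X in _ <= X + _]big_mkcond [X in _ <= _ + X]big_mkcond -big_split /=; apply: ler_sum => j _.
rewrite in_setT.
have ht : 0 <= f j (sedges E j) - \sum_(e in sedges E j) w e.
  by rewrite subr_ge0; apply: h3; rewrite ?inE.
move: (f j (sedges E j) - \sum_(e in sedges E j) w e) ht => t ht.
case: (hcov j) => [[-> hle]|[-> hle]].
- have h0 : 0 <= (if j \in Mb then sb j * t else 0) by case: ifP => // _; apply: mulr_ge0.
  have : s j * t <= sa j * t by apply: ler_wpM2r.
  move: (if j \in Mb then sb j * t else 0) h0 => z h0; lra.
- have h0 : 0 <= (if j \in Ma then sa j * t else 0) by case: ifP => // _; apply: mulr_ge0.
  have : s j * t <= sb j * t by apply: ler_wpM2r.
  move: (if j \in Ma then sa j * t else 0) h0 => z h0; lra.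
Qed.

Lemma opt_bound (Ma Mb : {set 'I_m}) (s sa sb : 'I_m -> R) :
  (forall j, mono_submod_on (sedges E j) (f j)) ->
  (forall i, 0 < v i) -> (forall i, 0 <= B i) ->
  (forall j, 0 <= sa j) -> (forall j, 0 <= sb j) ->
  (forall j, (j \in Ma /\ s j <= sa j) \/ (j \in Mb /\ s j <= sb j)) ->
  LWOPT E f v B [set: 'I_m] s <= LWOPT E f v B Ma sa + LWOPT E f v B Mb sb.
Proof.
move=> hf hv hB hsa hsb hcov; rewrite {1}/LWOPT; apply: ge_sup.
  by exists (LW E f v B [set: 'I_m] s (fun _ => 0)), (fun _ => 0); split => //; apply: feas0.
move=> x [w [hw ->]].
apply: le_trans (combine _ _ _ _ _ _ hv hB hsa hsb hcov hw) _.
rewrite -(LW_restr Ma) -(LW_restr Mb).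
by apply: lerD; apply: le_LWOPT => //; apply: feas_restr.
Qed.

End Helpers.

Theorem lemma4p7 (R : realType) (n m : nat) (E : {set 'I_n * 'I_m})
  (f : 'I_m -> {set 'I_n * 'I_m} -> R) (v B : 'I_n -> R)
  (rhoa rhob : 'I_m -> R) :
  (forall j, mono_submod_on (sedges E j) (f j)) ->
  (forall i, 0 < v i) -> (forall i, 0 <= B i) ->
  (forall j, 0 < rhoa j) -> (forall j, 0 < rhob j) ->
  LWOPT E f v B [set j | rhob j <= rhoa j] rhoa
  + LWOPT E f v B [set j | rhoa j <= rhob j] rhob
  >= (LWOPT E f v B [set: 'I_m] rhoa + LWOPT E f v B [set: 'I_m] rhob) / 2.
Proof.
move=> hf hv hB ha hb.
have ha' : forall j, 0 <= rhoa j by move=> j; apply: ltW.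
have hb' : forall j, 0 <= rhob j by move=> j; apply: ltW.
have H1 := @opt_bound R n m E f v B [set j | rhob j <= rhoa j] [set j | rhoa j <= rhob j]
  rhoa rhoa rhob hf hv hB ha' hb'.
have H2 := @opt_bound R n m E f v B [set j | rhob j <= rhoa j] [set j | rhoa j <= rhob j]
  rhob rhoa rhob hf hv hB ha' hb'.
have c1 : forall j, (j \in [set j | rhob j <= rhoa j] /\ rhoa j <= rhoa j) \/
   (j \in [set j | rhoa j <= rhob j] /\ rhoa j <= rhob j).
  move=> j; rewrite !inE; have [h|h] := leP (rhob j) (rhoa j).
    by left.
  by right; split; apply: ltW.
have c2 : forall j, (j \in [set j | rhob j <= rhoa j] /\ rhob j <= rhoa j) \/
   (j \in [set j | rhoa j <= rhob j] /\ rhob j <= rhob j).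
  move=> j; rewrite !inE; have [h|h] := leP (rhoa j) (rhob j).
    by right.
  by left; split; apply: ltW.
have := H1 c1; have := H2 c2; lra.
Qed.
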